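(* Let $(S,\|\cdot\|)$ be a complete $RN$ module over $K$ with base $(\Omega,\mathcal F,P)$, and let $A:D(A)\subset S\to S$ be a module homomorphism with $L^{0}_{++}(\mathcal F)\subset\rho(A)$. If there exists $M\in L^{0}_{+}(\mathcal F)$ with $M\geq1$ such that $\|\xi^{n}R(\xi,A)^{n}\|\leq M$ for any $n\in N$ and $\xi\in L^{0}_{++}(\mathcal F)$, then there exists an $L^{0}$-norm $|\cdot|$ on $S$ which is equivalent to $\|\cdot\|$ and satisfies $\|x\|\leq|x|\leq M\|x\|$ for any $x\in S$, and $|\xi R(\xi,A)x|\leq|x|$ for any $x\in S$ and $\xi\in L^{0}_{++}(\mathcal F)$.
   Context: $(\Omega,\mathcal F,P)$ is a probability space; $L^{0}(\mathcal F,K)$ ($K=R$ or $C$) is the algebra of equivalence classes of $K$-valued $\mathcal F$-measurable random variables, ordered a.s.; $L^{0}_{+}(\mathcal F)=\{\xi\in L^0(\mathcal F,R):\xi\ge 0\}$, $L^{0}_{++}(\mathcal F)=\{\xi\in L^0(\mathcal F,R):\xi>0\text{ a.s.}\}$. An $RN$ module over $K$ with base $(\Omega,\mathcal F,P)$ is a left $L^0(\mathcal F,K)$-module $S$ with a map $\|\cdot\|:S\to L^0_+(\mathcal F)$ (an $L^0$-norm) such that $\|\xi x\|=|\xi|\|x\|$, $\|x+y\|\le\|x\|+\|y\|$, $\|x\|=0\Rightarrow x=0$; it carries the $(\varepsilon,\lambda)$-topology ($x_n\to x$ iff $\|x_n-x\|\to0$ in probability); completeness refers to this topology. Two $L^0$-norms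 are equivalent if they induce the same $(\varepsilon,\lambda)$-topology. $B(S)$ is the set of continuous module homomorphisms $S\to S$, with $\|T\|=\bigwedge\{\xi\in L^0_+(\mathcal F):\|Tx\|\le\xi\|x\|\ \forall x\}$. $\rho(A)=\{\xi\in L^0(\mathcal F,K):\xi I-A:D(A)\to S\text{ is bijective and }(\xi I-A)^{-1}\in B(S)\}$, $R(\xi,A)=(\xi I-A)^{-1}$. *)

(* Defs.v *)
From HB Require Import structures.
From mathcomp Require Import all_boot all_order all_algebra.
From mathcomp Require Import all_classical all_reals all_analysis.
From mathcomp Require Import complex.

Set Implicit Arguments.
Unset Strict Implicit.
Unset Printing Implicit Defensive.

Import Order.TTheory GRing.Theory Num.Theory.
Local Open Scope classical_set_scope.
Local Open Scope ring_scope.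

(** The scalar field K is R or C = R[i]. *)
Inductive kind := RealK | ComplexK.

Definition Kt (R : realType) (k : kind) : numFieldType :=
  match k with RealK => R | ComplexK => R[i] end.

Definition kofR (R : realType) (k : kind) : R -> Kt R k :=
  match k return R -> Kt R k with
  | RealK => fun r => r
  | ComplexK => fun r => (r%:C)%C end.

Definition kabs (R : realType) (k : kind) : Kt R k -> R :=
  match k return Kt R k -> R with
  | RealK => fun r => `|r|
  | ComplexK => fun z => Num.sqrt (complex.Re z ^+ 2 + complex.Im z ^+ 2) end.

Section L0.
Context (R : realType) (k : kind) (d : measure_display) (Om : measurableType d)
  (P : probability Om R).

Definition ae (Q : Om -> Prop) : Prop := {ae P, forall w, Q w}.

(** representatives of elements of L^0(F,K), L^0(F,R), L^0_+(F), L^0_++(F) *)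
Definition L0 (f : Om -> Kt R k) : Prop :=
  match k return (Om -> Kt R k) -> Prop with
  | RealK => fun f => measurable_fun setT f
  | ComplexK => fun f => measurable_fun setT (fun w => complex.Re (f w)) /\
                         measurable_fun setT (fun w => complex.Im (f w)) end f.
Definition L0R (f : Om -> R) : Prop := measurable_fun setT f.
Definition L0plus (f : Om -> R) : Prop := L0R f /\ ae (fun w => 0 <= f w).
Definition L0pp (f : Om -> R) : Prop := L0R f /\ ae (fun w => 0 < f w).

Definition kc (f : Om -> R) : Om -> Kt R k := fun w => kofR k (f w).

Context (S : zmodType) (smul : (Om -> Kt R k) -> S -> S).

(** S is a left L^0(F,K)-module (smul is well defined on a.s.-classes) *)
Record is_L0module : Prop := {
  sm_wd : forall xi eta x, L0 xi -> L0 eta -> ae (fun w => xi w = eta w) ->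
    smul xi x = smul eta x;
  sm_addr : forall xi x y, L0 xi -> smul xi (x + y) = smul xi x + smul xi y;
  sm_addl : forall xi eta x, L0 xi -> L0 eta ->
    smul (fun w => xi w + eta w) x = smul xi x + smul eta x;
  sm_mul : forall xi eta x, L0 xi -> L0 eta ->
    smul (fun w => xi w * eta w) x = smul xi (smul eta x);
  sm_one : forall x, smul (fun _ => 1) x = x }.

Record is_L0norm (nrm : S -> Om -> R) : Prop := {
  nrm_L0 : forall x, L0plus (nrm x);
  nrm_hom : forall xi x, L0 xi ->
    ae (fun w => nrm (smul xi x) w = kabs (xi w) * nrm x w);
  nrm_tri : forall x y, ae (fun w => nrm (x + y) w <= nrm x w + nrm y w);
  nrm_def : forall x, ae (fun w => nrm x w = 0) -> x = 0 }.

Definition is_RN_module (nrm : S -> Om -> R) : Prop :=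
  is_L0module /\ is_L0norm nrm.

Definition el_nbhd (nrm : S -> Om -> R) (x : S) (eps lam : R) : set S :=
  [set y | ((1 - lam)%:E < P [set w | (nrm (y - x) w < eps)%R])%E].

Definition el_open (nrm : S -> Om -> R) (U : set S) : Prop :=
  forall x, U x -> exists eps lam : R,
    [/\ 0 < eps, 0 < lam, lam < 1 & el_nbhd nrm x eps lam `<=` U].

Definition equiv_norms (nrm1 nrm2 : S -> Om -> R) : Prop :=
  forall U, el_open nrm1 U <-> el_open nrm2 U.

Definition el_cauchy (nrm : S -> Om -> R) (u : nat -> S) : Prop :=
  forall eps lam : R, 0 < eps -> 0 < lam -> exists N : nat,
    forall m n : nat, (N <= m)%N -> (N <= n)%N ->
      (P [set w | (eps <= nrm (u n - u m) w)%R] < lam%:E)%E.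

Definition el_cvg (nrm : S -> Om -> R) (u : nat -> S) (x : S) : Prop :=
  forall eps lam : R, 0 < eps -> 0 < lam -> exists N : nat,
    forall n : nat, (N <= n)%N ->
      (P [set w | (eps <= nrm (u n - x) w)%R] < lam%:E)%E.

(** completeness w.r.t. the (metrizable) (eps,lambda)-topology *)
Definition el_complete (nrm : S -> Om -> R) : Prop :=
  forall u, el_cauchy nrm u -> exists x, el_cvg nrm u x.

Definition el_continuous (nrm : S -> Om -> R) (T : S -> S) : Prop :=
  forall U, el_open nrm U -> el_open nrm (T @^-1` U).

Definition is_modhom (T : S -> S) : Prop :=
  (forall x y, T (x + y) = T x + T y) /\
  (forall xi x, L0 xi -> T (smul xi x) = smul xi (T x)).

Definition inB (nrm : S -> Om -> R) (T : S -> S) : Prop :=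
  is_modhom T /\ el_continuous nrm T.

Definition is_partial_modhom (D : set S) (A : S -> S) : Prop :=
  [/\ D 0, (forall x y, D x -> D y -> D (x + y)),
      (forall xi x, L0 xi -> D x -> D (smul xi x)),
      (forall x y, D x -> D y -> A (x + y) = A x + A y) &
      (forall xi x, L0 xi -> D x -> A (smul xi x) = smul xi (A x))].

(** Rx is (xi I - A)^{-1} and belongs to B(S): i.e. xi in rho(A) and Rx = R(xi,A) *)
Definition is_resolvent (nrm : S -> Om -> R) (D : set S) (A : S -> S)
    (xi : Om -> Kt R k) (Rx : S -> S) : Prop :=
  [/\ inB nrm Rx,
      (forall y, D (Rx y) /\ smul xi (Rx y) - A (Rx y) = y) &
      (forall x, D x -> Rx (smul xi x - A x) = x)].

Definition is_opbound (nrm : S -> Om -> R) (T : S -> S) (xi : Om -> R) : Prop :=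
  L0plus xi /\ forall x, ae (fun w => nrm (T x) w <= xi w * nrm x w).

Definition is_opnorm (nrm : S -> Om -> R) (T : S -> S) (N : Om -> R) : Prop :=
  [/\ L0plus N,
      (forall xi, is_opbound nrm T xi -> ae (fun w => N w <= xi w)) &
      (forall eta, L0R eta ->
         (forall xi, is_opbound nrm T xi -> ae (fun w => eta w <= xi w)) ->
         ae (fun w => eta w <= N w))].

End L0.

(* Main.v *)
Require Import Defs.
From HB Require Import structures.
From mathcomp Require Import all_boot all_order all_algebra.
From mathcomp Require Import all_classical all_reals all_analysis.
From mathcomp Require Import complex.
Import Order.TTheory GRing.Theory Num.Theory.
Local Open Scope classical_set_scope.
Local Open Scope ring_scope.
Import measurable_realfun.
From mathcomp Require Import ring lra.

Section K.
Context (R : realType) (k : kind).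
Lemma kofRD (a b : R) : kofR k (a + b) = kofR k a + kofR k b.
Proof. by case: k => //=; rewrite rmorphD. Qed.
Lemma kofRM (a b : R) : kofR k (a * b) = kofR k a * kofR k b.
Proof. by case: k => //=; rewrite rmorphM. Qed.
Lemma kofR1 : kofR k (1 : R) = 1.
Proof. by case: k => //=; rewrite rmorph1. Qed.
Lemma kabs_kofR (a : R) : kabs (kofR k a) = `|a|.
Proof. case: k => //=; by rewrite expr0n addr0 /= sqrtr_sqr. Qed.
Lemma kabs_ge0 (z : Kt R k) : 0 <= kabs z.
Proof. by case: k z => //= z; rewrite sqrtr_ge0. Qed.
End K.

Lemma measurable_inv (R : realType) : measurable_fun setT (GRing.inv : R -> R).
Proof.
have m0 : measurable [set (0:R)] := measurable_set1 0.
have -> : [set: R] = ~` [set 0] `|` [set 0].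
  by apply/seteqP; split => x //= _; case: (pselect (x = 0)) => h; [right|left].
apply/measurable_funU => //; first exact: measurableC.
split.
  apply: measurable_realfun.open_continuous_measurable_fun.
    by rewrite openC; exact: closed_eq.
  move=> x; rewrite inE /= => /eqP x0; exact: inv_continuous.
move=> _ Y mY; case: (pselect (Y (0^-1 : R))) => h.
  by rewrite (_ : _ `&` _ = [set 0]) //; apply/seteqP; split => x /=; [case|move=> ->].
rewrite (_ : _ `&` _ = set0) //; apply/seteqP; split => x //=; case=> -> //.
Qed.

Section AE.
Context (R : realType) (d : measure_display) (Om : measurableType d)
  (P : probability Om R).
Lemma aeS (Q Q' : Om -> Prop) : ae P Q -> (forall w, Q w -> Q' w) -> ae P Q'.
Proof. by move=> H h; move: H; rewrite /ae; apply: filterS. Qed.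
Lemma ae2 (Q1 Q2 Q : Om -> Prop) : ae P Q1 -> ae P Q2 ->
  (forall w, Q1 w -> Q2 w -> Q w) -> ae P Q.
Proof. by move=> H1 H2 h; move: H1 H2; rewrite /ae; apply: filterS2. Qed.
Lemma ae3 (Q1 Q2 Q3 Q : Om -> Prop) : ae P Q1 -> ae P Q2 -> ae P Q3 ->
  (forall w, Q1 w -> Q2 w -> Q3 w -> Q w) -> ae P Q.
Proof. by move=> H1 H2 H3 h; move: H1 H2 H3; rewrite /ae; apply: filterS3. Qed.
Lemma aeT (Q : Om -> Prop) : (forall w, Q w) -> ae P Q.
Proof. by move=> h; exact: aeW. Qed.
Lemma aeN (Q : nat -> Om -> Prop) : (forall n, ae P (Q n)) -> ae P (fun w => forall n, Q n w).
Proof. by move=> h; apply: ae_foralln. Qed.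
Lemma aeN2 (Q : nat -> nat -> Om -> Prop) : (forall n m, ae P (Q n m)) ->
  ae P (fun w => forall n m, Q n m w).
Proof. by move=> h; apply: aeN => n; apply: aeN. Qed.
Lemma aeAnd (Q1 Q2 : Om -> Prop) : ae P Q1 -> ae P Q2 -> ae P (fun w => Q1 w /\ Q2 w).
Proof. by rewrite /ae; apply: filterS2. Qed.
Lemma ae_false : ~ ae P (fun _ => False).
Proof.
case=> N [mN PN0 sN]; have : P setT = 0%E.
  by apply/eqP; rewrite -measure_le0 -PN0 le_measure ?inE //; move=> w _; apply: sN.
by rewrite probability_setT => /eqP; rewrite onee_eq0.
Qed.
End AE.
Arguments aeS {R d Om P Q Q'}.
Arguments ae2 {R d Om P Q1 Q2 Q}.
Arguments ae3 {R d Om P Q1 Q2 Q3 Q}.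
Arguments aeT {R d Om P Q}.
Arguments aeN {R d Om P Q}.
Arguments aeN2 {R d Om P Q}.
Arguments aeAnd {R d Om P Q1 Q2}.


Section Equiv.
Context (R : realType) (d : measure_display) (Om : measurableType d)
  (P : probability Om R) (S : zmodType) (n1 n2 : S -> Om -> R) (M : Om -> R).
Local Notation mble f := (measurable_fun setT f).
Hypotheses (m1 : forall x, mble (n1 x)) (m2 : forall x, mble (n2 x)) (mM : mble M).
Hypothesis n1pos : forall x, ae P (fun w => 0 <= n1 x w).
Hypothesis hb : forall x, ae P (fun w => n1 x w <= n2 x w <= M w * n1 x w).

Lemma mset_lt (f : Om -> R) c : mble f -> measurable [set w | f w < c].
Proof.
move=> mf; have := mf measurableT _ (measurable_itv `]-oo, c[); rewrite setTI.
suff -> : [set w | f w < c] = f @^-1` `]-oo, c[ by [].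
by apply/seteqP; split => w /=; rewrite in_itv /=.
Qed.

Lemma mset_gt (f : Om -> R) c : mble f -> measurable [set w | c < f w].
Proof.
move=> mf; have := mf measurableT _ (measurable_itv `]c, +oo[); rewrite setTI.
suff -> : [set w | c < f w] = f @^-1` `]c, +oo[ by [].
by apply/seteqP; split => w /=; rewrite in_itv /= andbT.
Qed.

Lemma le_ae_measure (B C : set Om) : measurable B -> measurable C ->
  ae P (fun w => B w -> C w) -> (P B <= P C)%E.
Proof.
move=> mB mC [N [mN PN0 sN]].
have sub : B `<=` C `|` N.
  move=> w Bw; case: (pselect (C w)) => h; [by left|right].
  by apply: sN => /= /(_ Bw).
apply: (le_trans (le_measure _ _ _ sub)); rewrite ?inE //; first exact: measurableU.
apply: (le_trans (measureU2 _ _ _)) => //.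
rewrite -[X in (_ <= X)%E]adde0; apply: leeD => //.
by rewrite le_eqVlt; apply/orP; left; apply/eqP; exact: PN0.
Qed.

Lemma finP (B : set Om) : measurable B -> P B = (fine (P B))%:E.
Proof.
move=> mB; rewrite fineK // ge0_fin_numE ?measure_ge0 //.
by apply: (le_lt_trans (probability_le1 _ mB)); exact: ltry.
Qed.

Lemma exists_K (lam : R) : 0 < lam -> exists K : nat, fine (P [set w | K%:R < M w]) < lam.
Proof.
move=> lam0.
set F := fun n : nat => [set w | n%:R < M w].
have mF : forall n, measurable (F n) by move=> n; apply: mset_gt.
have F0 : \bigcap_n F n = set0.
  apply/seteqP; split => w //= hw.
  have := hw (Num.Def.trunc (M w)).+1 I; rewrite /F /=.
  move=> h; have := truncnS_gt (M w); rewrite ltNge => /negP; apply.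
  exact: ltW.
have hc : (P \o F) n @[n --> \oo] --> P (\bigcap_n F n).
  apply: nonincreasing_cvg_mu => //.
  - by rewrite (le_lt_trans (probability_le1 _ (mF 0%N))) // ltry.
  - exact: bigcapT_measurable.
  - move=> n m nm; apply/subsetPset => w; rewrite /F /=; apply: le_lt_trans.
    by rewrite ler_nat.
rewrite F0 measure0 in hc.
have := cvgr_lt 0 (fine_cvg hc) lam lam0.
case=> N _ HN; exists N; exact: (HN N (leqnn N)).
Qed.

Lemma equiv_bounds : equiv_norms P n1 n2.
Proof.
move=> U; split => HU x Ux.
  have [eps [lam [e0 l0 l1 sub]]] := HU x Ux.
  exists eps, lam; split => // y Hy; apply: sub; rewrite /el_nbhd /= in Hy *.
  apply: (lt_le_trans Hy); apply: le_ae_measure; try exact: mset_lt.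
  by apply: (aeS (hb (y - x))) => w /andP [h1 h2]; apply: le_lt_trans.
have [eps [lam [e0 l0 l1 sub]]] := HU x Ux.
have [K HK] := exists_K (lam / 2) (divr_gt0 l0 (ltr0Sn _ 1)).
set K' : R := (K.+1)%:R.
have K'0 : 0 < K' by rewrite ltr0n.
exists (eps / K'), (lam / 2); split.
- by rewrite divr_gt0.
- by rewrite divr_gt0.
- by rewrite ltr_pdivrMr // mul1r; apply: (lt_trans l1); rewrite ltr1n.
move=> y Hy; apply: sub; rewrite /el_nbhd /= in Hy *.
set E1 := [set w | n1 (y - x) w < eps / K'] in Hy.
set E2 := [set w | n2 (y - x) w < eps].
set G := [set w | K%:R < M w] in HK.
have mE1 : measurable E1 by apply: mset_lt.
have mE2 : measurable E2 by apply: mset_lt.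
have mG : measurable G by apply: mset_gt.
have h1 : (P E1 <= P E2 + P G)%E.
  apply: (le_trans _ (measureU2 _ mE2 mG)).
  apply: le_ae_measure => //; first exact: measurableU.
  apply: (aeS (aeAnd (hb (y - x)) (n1pos (y - x)))) => w [/andP [a1 a2] a3] hw.
  case: (pselect (G w)) => hG; [by right|left].
  rewrite /E2 /=; move: hG; rewrite /G /= => /negP; rewrite -leNgt => hM.
  rewrite /E1 /= in hw.
  apply: (le_lt_trans a2); apply: (le_lt_trans (y := K' * n1 (y - x) w)).
    apply: ler_wpM2r => //; apply: (le_trans hM); rewrite /K' ler_nat; exact: leqnSn.
  by rewrite -ltr_pdivlMl // mulrC.
move: Hy h1; rewrite (finP _ mE1) (finP _ mE2) (finP _ mG) -EFinD lte_fin lee_fin.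
rewrite lte_fin; move: HK; lra.
Qed.

End Equiv.

Section Basic.
Context (R : realType) (k : kind) (d : measure_display) (Om : measurableType d)
  (P : probability Om R) (S : zmodType) (smul : (Om -> Kt R k) -> S -> S)
  (nrm : S -> Om -> R).
Hypothesis Hm : is_L0module P smul.
Hypothesis Hn : is_L0norm P smul nrm.

Local Notation sc f := (smul (kc k f)).
Local Notation mble f := (measurable_fun setT f).

Lemma L0kc (f : Om -> R) : mble f -> L0 (kc k f).
Proof.
by case: k => /= mf //; split => //=; exact: measurable_cst.
Qed.

Lemma kc_ext (f g : Om -> R) : f =1 g -> kc k f = kc k g.
Proof. by move=> fg; apply/funext => w; rewrite /kc fg. Qed.

Lemma smul_ext (xi eta : Om -> Kt R k) x : xi =1 eta -> smul xi x = smul eta x.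
Proof. by move=> /funext ->. Qed.

Lemma scD (f g : Om -> R) x : mble f -> mble g ->
  sc (fun w => f w + g w) x = sc f x + sc g x.
Proof.
move=> mf mg; rewrite -(sm_addl Hm); try exact: L0kc.
by apply: smul_ext => w; rewrite /kc kofRD.
Qed.

Lemma scM (f g : Om -> R) x : mble f -> mble g ->
  sc (fun w => f w * g w) x = sc f (sc g x).
Proof.
move=> mf mg; rewrite -(sm_mul Hm); try exact: L0kc.
by apply: smul_ext => w; rewrite /kc kofRM.
Qed.

Lemma sc1 x : sc (fun _ => 1) x = x.
Proof. by rewrite -[RHS](sm_one Hm); apply: smul_ext => w; rewrite /kc kofR1. Qed.

Lemma smul0 xi : L0 xi -> smul xi 0 = 0.
Proof.
move=> Lx; have := sm_addr Hm 0 0 Lx; rewrite addr0.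
by move/(congr1 (fun z => z - smul xi 0)); rewrite subrr addrK.
Qed.

Lemma smulN xi x : L0 xi -> smul xi (- x) = - smul xi x.
Proof.
move=> Lx; apply/eqP; rewrite -subr_eq0 opprK -(sm_addr Hm) //.
by rewrite addNr smul0.
Qed.

Lemma smulB xi x y : L0 xi -> smul xi (x - y) = smul xi x - smul xi y.
Proof. by move=> Lx; rewrite (sm_addr Hm) // smulN. Qed.

Lemma sc0 x : sc (fun _ => 0) x = 0.
Proof.
have m0 : mble (fun _ : Om => (0:R)) by exact: measurable_cst.
have := scD _ _ x m0 m0; rewrite (_ : (fun w => 0 + 0) = fun _ => 0); last by apply/funext => w; rewrite addr0.
by move/(congr1 (fun z => z - sc (fun _ => 0) x)); rewrite subrr addrK => h; rewrite -h.
Qed.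

Lemma scN (f : Om -> R) x : mble f -> sc (fun w => - f w) x = - sc f x.
Proof.
move=> mf; apply/eqP; rewrite -subr_eq0 opprK -scD //; last exact: measurableT_comp.
by rewrite (_ : (fun w => - f w + f w) = fun _ => 0) ?sc0 //; apply/funext => w; rewrite addNr.
Qed.

Lemma scB (f g : Om -> R) x : mble f -> mble g ->
  sc (fun w => f w - g w) x = sc f x - sc g x.
Proof. by move=> mf mg; rewrite scD ?scN //; exact: measurableT_comp. Qed.

Lemma smul_comm xi eta x : L0 xi -> L0 eta -> smul xi (smul eta x) = smul eta (smul xi x).
Proof.
move=> Lx Le; rewrite -!(sm_mul Hm) //; apply: smul_ext => w; exact: mulrC.
Qed.

Lemma nrm_ge0 x : ae P (fun w => 0 <= nrm x w).
Proof. by case: (nrm_L0 Hn x). Qed.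

Lemma nrm_mble x : mble (nrm x).
Proof. by case: (nrm_L0 Hn x). Qed.

Lemma nrm_sc (f : Om -> R) x : mble f ->
  ae P (fun w => nrm (sc f x) w = `|f w| * nrm x w).
Proof.
move=> mf; apply: (aeS (nrm_hom Hn x (L0kc _ mf))) => w ->.
by rewrite /kc kabs_kofR.
Qed.

Lemma nrmN x : ae P (fun w => nrm (- x) w = nrm x w).
Proof.
have m1 : mble (fun _ : Om => (-1 : R)) by exact: measurable_cst.
have -> : - x = sc (fun _ => -1) x.
  by rewrite (_ : (fun _ => -1) = fun w => - (fun _ => 1) w) // scN ?sc1 //; exact: measurable_cst.
by apply: (aeS (nrm_sc _ x m1)) => w ->; rewrite normrN normr1 mul1r.
Qed.


Context (D : set S) (A : S -> S).
Hypothesis HA : is_partial_modhom smul D A.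
Local Notation isR f Rx := (is_resolvent P smul nrm D A (kc k f) Rx).

Section OneRes.
Context {f : Om -> R} {Rx : S -> S}.
Hypothesis HR : isR f Rx.

Lemma res_add x y : Rx (x + y) = Rx x + Rx y.
Proof. by case: HR => -[[]]. Qed.

Lemma res_smul xi x : L0 xi -> Rx (smul xi x) = smul xi (Rx x).
Proof. by case: HR => -[[_ h] _] _ _; apply: h. Qed.

Lemma res_sc g x : mble g -> Rx (sc g x) = sc g (Rx x).
Proof. by move=> mg; apply: res_smul; apply: L0kc. Qed.

Lemma res0 : Rx 0 = 0.
Proof.
have := res_add 0 0; rewrite addr0.
by move/(congr1 (fun z => z - Rx 0)); rewrite subrr addrK => h; rewrite -h.
Qed.

Lemma resN x : Rx (- x) = - Rx x.
Proof. by apply/eqP; rewrite -subr_eq0 opprK -res_add addNr res0. Qed.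

Lemma resB x y : Rx (x - y) = Rx x - Rx y.
Proof. by rewrite res_add resN. Qed.

Lemma resD y : D (Rx y).
Proof. by case: HR => _ h _; case: (h y). Qed.

Lemma res_eq y : sc f (Rx y) - A (Rx y) = y.
Proof. by case: HR => _ h _; case: (h y). Qed.

Lemma res_inv x : D x -> Rx (sc f x - A x) = x.
Proof. by case: HR => _ _ h; apply: h. Qed.

Lemma iter_smul n xi x : L0 xi -> iter n Rx (smul xi x) = smul xi (iter n Rx x).
Proof. by move=> Lx; elim: n => //= n ->; rewrite res_smul. Qed.

Lemma iter_add n x y : iter n Rx (x + y) = iter n Rx x + iter n Rx y.
Proof. by elim: n => //= n ->; rewrite res_add. Qed.

End OneRes.

Lemma A_sc g x : mble g -> D x -> A (sc g x) = sc g (A x).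
Proof. by case: HA => _ _ _ _ h mg Dx; apply: h => //; apply: L0kc. Qed.

Lemma D_sc g x : mble g -> D x -> D (sc g x).
Proof. by case: HA => _ _ h _ _ mg Dx; apply: h => //; apply: L0kc. Qed.

Lemma res_identity f1 f2 R1 R2 y : mble f1 -> mble f2 -> isR f1 R1 -> isR f2 R2 ->
  R1 y - R2 y = sc (fun w => f2 w - f1 w) (R1 (R2 y)).
Proof.
move=> m1 m2 H1 H2.
have mB : mble (fun w => f1 w - f2 w) by apply: measurable_funB.
set u := R2 y.
have Du : D u by apply: (resD H2).
have e2 : sc f2 u - A u = y by apply: (res_eq H2).
have e1 : sc f1 u - A u = y + sc (fun w => f1 w - f2 w) u.
  rewrite scB // -e2.
  by rewrite [RHS]addrC -addrA addKr.
have := res_inv H1 _ Du; rewrite e1 (res_add H1) (res_sc H1) // => hu.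
rewrite -[in LHS]hu opprD addrA subrr add0r -scN //.
by apply: smul_ext => w; rewrite /kc opprB.
Qed.

Lemma res_local f1 f2 R1 R2 (B : set Om) x : mble f1 -> mble f2 -> measurable B ->
  (forall w, B w -> f1 w = f2 w) -> isR f1 R1 -> isR f2 R2 ->
  sc (\1_B) (R1 x) = sc (\1_B) (R2 x).
Proof.
move=> m1 m2 mB e H1 H2.
have mI : mble (\1_B : Om -> R) by apply: measurable_indic.
set u := R1 x.
have Du : D u by apply: (resD H1).
have Dv : D (sc (\1_B) u) by apply: D_sc.
have : sc f2 (sc (\1_B) u) - A (sc (\1_B) u) = sc (\1_B) x.
  rewrite A_sc // -scM // -(res_eq H1 x) smulB; last exact: L0kc.
  congr (_ - _); rewrite -scM //; apply: smul_ext => w; congr kofR.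
  rewrite indicE; case: (boolP (w \in B)) => [/[dup] wB|]; last by rewrite !mulr0 mul0r.
  by rewrite inE => /e ->; rewrite mulrC.
move/(congr1 R2); rewrite (res_inv H2) // (res_sc H2) // => ->.
Qed.


Section Pazy.
Variable N : S -> Om -> R.
Hypothesis Nhom : forall (g : Om -> R) y, mble g ->
  ae P (fun w => N (sc g y) w = `|g w| * N y w).
Hypothesis Ntri : forall y z, ae P (fun w => N (y + z) w <= N y w + N z w).
Variables (mu : R) (Rmu : S -> S).
Hypothesis mu_gt0 : 0 < mu.
Hypothesis HRmu : isR (fun _ => mu) Rmu.
Hypothesis Ncontr : forall y,
  ae P (fun w => N (sc (fun _ => mu) (Rmu y)) w <= N y w).

Lemma pazy (l : Om -> R) Rl : mble l -> ae P (fun w => 0 < l w) ->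
  (forall w, l w <= mu) -> isR l Rl ->
  forall y, ae P (fun w => N (sc l (Rl y)) w <= N y w).
Proof.
move=> ml lpos lmu Hl y.
have mmu : mble (fun _ : Om => mu) by exact: measurable_cst.
have mu0 : mu != 0 by rewrite gt_eqF.
set z := sc l (Rl y).
have mt : mble (fun w => l w / mu).
  by apply: measurable_funM => //; exact: measurable_cst.
have mlm : mble (fun w => mu - l w) by apply: measurable_funB.
have ms : mble (fun w => (mu - l w) / mu).
  by apply: measurable_funM => //; exact: measurable_cst.
have hid : Rmu y - Rl y = sc (fun w => l w - mu) (Rmu (Rl y)).
  exact: (res_identity _ _ _ _ y mmu ml HRmu Hl).
have eRl : Rl y = Rmu y + sc (fun w => mu - l w) (Rmu (Rl y)).
  rewrite (_ : (fun w => mu - l w) = fun w => - (l w - mu)); last first.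
    by apply/funext => w; rewrite opprB.
  rewrite scN; last exact: measurable_funB.
  by rewrite -hid opprB addrC subrK.
have ez : z = sc (fun w => l w / mu) (sc (fun _ => mu) (Rmu y)) +
              sc (fun w => (mu - l w) / mu) (sc (fun _ => mu) (Rmu z)).
  rewrite {1}/z {1}eRl (sm_addr Hm); last exact: L0kc.
  congr (_ + _).
    rewrite -scM //; apply: smul_ext => w; by rewrite /kc divfK.
  rewrite /z (res_sc HRmu) // -!scM //; last exact: measurable_funM.
  apply: smul_ext => w; rewrite /kc; congr kofR.
  by rewrite divfK // mulrC.
have h1 := Ntri (sc (fun w => l w / mu) (sc (fun _ => mu) (Rmu y)))
   (sc (fun w => (mu - l w) / mu) (sc (fun _ => mu) (Rmu z))).
rewrite -ez in h1.
have h2 := Nhom _ (sc (fun _ => mu) (Rmu y)) mt.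
have h3 := Nhom _ (sc (fun _ => mu) (Rmu z)) ms.
apply: (aeS (aeAnd h1 (aeAnd h2 (aeAnd h3 (aeAnd (Ncontr y) (aeAnd (Ncontr z) lpos)))))).
move=> w [a1 [a2 [a3 [a4 [a5 a6]]]]].
have lm := lmu w.
move: a1; rewrite a2 a3 ger0_norm; last by rewrite divr_ge0 // ltW.
rewrite ger0_norm; last by rewrite divr_ge0 ?subr_ge0 // ltW.
rewrite mulrBl divff //.
set t := l w / mu.
have t0 : 0 < t by rewrite divr_gt0.
have t1 : t <= 1 by rewrite ler_pdivrMr // mul1r.
move: a4 a5; set A1 := N (sc _ (Rmu y)) w; set B1 := N (sc _ (Rmu z)) w => a4 a5 a1.
nra.
Qed.

Lemma pazy_iter (l : Om -> R) Rl n : mble l -> ae P (fun w => 0 < l w) ->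
  (forall w, l w <= mu) -> isR l Rl ->
  forall y, ae P (fun w => N (sc (fun w => l w ^+ n) (iter n Rl y)) w <= N y w).
Proof.
move=> ml lpos lmu Hl; elim: n => [|n IH] y.
  rewrite (_ : sc _ _ = sc (fun _ => 1) y); last by apply: smul_ext => w; rewrite /kc expr0.
  by rewrite sc1; apply: aeT => w.
have e : sc (fun w => l w ^+ n.+1) (iter n.+1 Rl y) =
         sc l (Rl (sc (fun w => l w ^+ n) (iter n Rl y))).
  have mX : mble (fun w => l w ^+ n) by exact: measurable_funX.
  rewrite (res_sc Hl) // -scM //.
  by apply: smul_ext => w; rewrite /kc exprS.
rewrite e; apply: (ae2 (pazy _ _ ml lpos lmu Hl (sc (fun w => l w ^+ n) (iter n Rl y))) (IH y)) => w.
exact: le_trans.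
Qed.

End Pazy.

Definition issup (u : nat -> R) (s : R) :=
  (forall i, u i <= s) /\ (forall c, (forall i, u i <= c) -> s <= c).

Definition bsup (f : nat -> Om -> R) (B : Om -> R) (w : Om) : R :=
  sup (range (fun i => Num.min (f i w) (B w))).

Lemma bsup_mble f B : (forall i, mble (f i)) -> mble B -> mble (bsup f B).
Proof.
move=> mf mB.
have := @measurable_fun_sups _ _ R setT (fun i w => Num.min (f i w) (B w)) 0%N.
have -> : (fun x => sups ((fun i w => Num.min (f i w) (B w)) ^~ x) 0%N) = bsup f B.
  apply/funext => w; rewrite /sups /bsup /=; congr sup.
  by apply/seteqP; split => _ [i _ <-]; exists i.
apply.
  move=> t _; exists (B t) => _ [i _ <-]; by rewrite ge_min lexx orbT.
by move=> i; apply: measurable_minr.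
Qed.

Lemma bsup_issup f B w : (forall i, f i w <= B w) -> issup (fun i => f i w) (bsup f B w).
Proof.
move=> hB; rewrite /bsup.
have -> : (fun i => Num.min (f i w) (B w)) = (fun i => f i w).
  by apply/funext => i; rewrite min_l.
have hub : has_ubound (range (fun i => f i w)).
  by exists (B w) => _ [i _ <-].
split.
  by move=> i; apply: ub_le_sup => //; exists i.
move=> c hc; apply: ge_sup; first by exists (f 0%N w), 0%N.
by move=> _ [i _ <-].
Qed.

Lemma issup_uniq {u s t} : issup u s -> issup u t -> s = t.
Proof. by move=> [h1 h2] [h3 h4]; apply/le_anti; rewrite h2 ?h4. Qed.

Lemma issup_ext {u v s} : (forall i, u i = v i) -> issup u s -> issup v s.
Proof.
move=> e [h1 h2]; split; first by move=> i; rewrite -e.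
by move=> c hc; apply: h2 => i; rewrite e.
Qed.

Lemma issup_scale {a u s} : 0 <= a -> issup u s -> issup (fun i => a * u i) (a * s).
Proof.
move=> a0 [h1 h2]; split; first by move=> i; rewrite ler_wpM2l.
move=> c hc; have [e0|ap] := eqVneq a 0.
  by move: (hc 0%N); rewrite e0 !mul0r.
have ap' : 0 < a by rewrite lt_def ap a0.
rewrite -ler_pdivlMl //; apply: h2 => i; rewrite ler_pdivlMl //.
Qed.

Lemma opnorm_bound (T : S -> S) N0 : is_opnorm P nrm T N0 ->
  forall x, ae P (fun w => nrm (T x) w <= N0 w * nrm x w).
Proof.
case=> [[mN _] Hlow Hglb] x.
have [xi0 [[_ hxi0] hxi]] : exists xi, is_opbound P nrm T xi.
  case: (pselect (exists xi, is_opbound P nrm T xi)) => // Hno.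
  exfalso; apply: (@ae_false _ _ _ P).
  have m1 : mble (fun w => N0 w + 1).
    by apply: measurable_funD => //; exact: measurable_cst.
  have H := Hglb (fun w => N0 w + 1) m1
    (fun xi hxi => False_ind _ (Hno (ex_intro _ xi hxi))).
  by apply: (aeS H) => w; rewrite gerDl ler10.
set g := fun w => nrm (T x) w * (nrm x w)^-1.
have mg : mble g.
  apply: measurable_funM; first exact: nrm_mble.
  by apply: measurableT_comp; [exact: measurable_inv|exact: nrm_mble].
have Hg : ae P (fun w => g w <= N0 w).
  apply: Hglb => // xi [[_ hxi0'] hxi'].
  apply: (ae3 (nrm_ge0 x) hxi0' (hxi' x)) => w h0 hx hb.
  rewrite /g; have [->|nz] := eqVneq (nrm x w) 0; first by rewrite invr0 mulr0.
  have p : 0 < nrm x w by rewrite lt_def nz h0.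
  by rewrite ler_pdivrMr.
apply: (aeS (aeAnd Hg (aeAnd (nrm_ge0 x) (hxi x)))) => w [a1 [a2 a3]].
have [e0|nz] := eqVneq (nrm x w) 0.
  by move: a3; rewrite e0 !mulr0.
have p : 0 < nrm x w by rewrite lt_def nz a2.
by rewrite -ler_pdivrMr.
Qed.

Section Main.
Variable M : Om -> R.
Hypothesis mM : mble M.
Variable Rm : nat -> S -> S.
Definition mu_ (m : nat) : R := (m.+1)%:R.
Hypothesis HRm : forall m, isR (fun _ => mu_ m) (Rm m).
Definition Tm m n y := sc (fun w => (fun _ : Om => mu_ m) w ^+ n) (iter n (Rm m) y).
Hypothesis Hop : forall (xi : Om -> R) (Rx : S -> S) (n : nat), L0pp P xi ->
  isR xi Rx -> exists N, is_opnorm P nrm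
     (fun x => smul (kc k (fun w => xi w ^+ n)) (iter n Rx x)) N
     /\ ae P (fun w => N w <= M w).
Hypothesis Hres : forall xi, L0pp P xi -> exists Rx, isR xi Rx.

Lemma mu_gt0' m : 0 < mu_ m.
Proof. by rewrite /mu_ ltr0n. Qed.

Lemma Lcst m : L0pp P (fun _ : Om => mu_ m).
Proof. by split; [exact: measurable_cst|apply: aeT => w; exact: mu_gt0']. Qed.

Lemma HT m n y : ae P (fun w => nrm (Tm m n y) w <= M w * nrm y w).
Proof.
have [N0 [HN0 HNM]] := Hop (fun _ => mu_ m) (Rm m) n (Lcst m) (HRm m).
apply: (aeS (aeAnd (opnorm_bound _ _ HN0 y) (aeAnd HNM (nrm_ge0 y)))).
move=> w [h1 [h2 h3]]; apply: (le_trans h1); exact: ler_wpM2r.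
Qed.

Definition Bd y w := `|M w| * `|nrm y w|.
Definition Nm m y := bsup (fun n => nrm (Tm m n y)) (Bd y).
Definition Nr y := bsup (fun m => Nm m y) (Bd y).

Lemma mu_gt0 m : 0 < mu_ m.
Proof. by rewrite /mu_ ltr0n. Qed.

Lemma mcst (c : R) : mble (fun _ : Om => c).
Proof. exact: measurable_cst. Qed.

Lemma Bd_mble y : mble (Bd y).
Proof.
apply: measurable_funM; apply: measurableT_comp => //; exact: nrm_mble.
Qed.

Lemma le_Bd y w a : a <= M w * nrm y w -> a <= Bd y w.
Proof. by move=> h; apply: (le_trans h); rewrite /Bd -normrM ler_norm. Qed.

Lemma Nm_mble m y : mble (Nm m y).
Proof. by apply: bsup_mble => [n|]; [exact: nrm_mble|exact: Bd_mble]. Qed.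

Lemma Nm_issup m y : ae P (fun w => issup (fun n => nrm (Tm m n y) w) (Nm m y w)).
Proof.
apply: (aeS (aeN (fun n => HT m n y))) => w h.
by apply: bsup_issup => n; apply: le_Bd.
Qed.

Lemma Tm0 m y : Tm m 0 y = y.
Proof.
rewrite /Tm /= -[RHS]sc1.
by apply: smul_ext => w; rewrite /kc expr0.
Qed.

Lemma Tm_smul m n xi y : L0 xi -> Tm m n (smul xi y) = smul xi (Tm m n y).
Proof.
move=> Lx; rewrite /Tm (iter_smul (HRm m)) // smul_comm //.
by apply: L0kc; exact: mcst.
Qed.

Lemma Tm_add m n y z : Tm m n (y + z) = Tm m n y + Tm m n z.
Proof.
rewrite /Tm (iter_add (HRm m)) (sm_addr Hm) //.
by apply: L0kc; exact: mcst.
Qed.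

Lemma Tm_S m n y : Tm m n (sc (fun _ => mu_ m) (Rm m y)) = Tm m n.+1 y.
Proof.
rewrite /Tm (iter_smul (HRm m)); last by apply: L0kc; exact: mcst.
rewrite -scM; try exact: mcst.
by rewrite -iterSr; apply: smul_ext => w; rewrite /kc exprSr.
Qed.

Lemma Nm_hom m xi y : L0 xi ->
  ae P (fun w => Nm m (smul xi y) w = kabs (xi w) * Nm m y w).
Proof.
move=> Lx.
apply: (aeS (aeAnd (aeN (fun n => nrm_hom Hn (Tm m n y) Lx))
   (aeAnd (Nm_issup m (smul xi y)) (Nm_issup m y)))) => w [h1 [h2 h3]].
apply: (issup_uniq h2); apply: (issup_ext _ (issup_scale (kabs_ge0 _ _ (xi w)) h3)).
by move=> n /=; rewrite Tm_smul // h1.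
Qed.

Lemma Nm_sc m (g : Om -> R) y : mble g ->
  ae P (fun w => Nm m (sc g y) w = `|g w| * Nm m y w).
Proof.
move=> mg; apply: (aeS (Nm_hom m _ y (L0kc _ mg))) => w ->.
by rewrite /kc kabs_kofR.
Qed.

Lemma Nm_tri m y z : ae P (fun w => Nm m (y + z) w <= Nm m y w + Nm m z w).
Proof.
apply: (aeS (aeAnd (aeN (fun n => nrm_tri Hn (Tm m n y) (Tm m n z)))
   (aeAnd (Nm_issup m (y + z)) (aeAnd (Nm_issup m y) (Nm_issup m z)))))
   => w [h1 [h2 [h3 h4]]].
apply: h2.2 => n; rewrite Tm_add; apply: (le_trans (h1 n)).
by apply: lerD; [apply: h3.1|apply: h4.1].
Qed.

Lemma Nm_contr m y :
  ae P (fun w => Nm m (sc (fun _ => mu_ m) (Rm m y)) w <= Nm m y w).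
Proof.
apply: (aeS (aeAnd (Nm_issup m (sc (fun _ => mu_ m) (Rm m y))) (Nm_issup m y)))
   => w [h1 h2].
by apply: h1.2 => n; rewrite Tm_S; apply: h2.1.
Qed.

Lemma Nm_lower m y : ae P (fun w => nrm y w <= Nm m y w).
Proof.
by apply: (aeS (Nm_issup m y)) => w h; have := h.1 0%N; rewrite Tm0.
Qed.

Lemma Nm_upper m y : ae P (fun w => Nm m y w <= M w * nrm y w).
Proof.
apply: (aeS (aeAnd (Nm_issup m y) (aeN (fun n => HT m n y)))) => w [h1 h2].
exact: h1.2.
Qed.

Lemma Nm_mono m m' y : (m <= m')%N -> ae P (fun w => Nm m y w <= Nm m' y w).
Proof.
move=> mm'.
have lmu : forall w : Om, (fun _ : Om => mu_ m) w <= mu_ m'.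
  by move=> w; rewrite /mu_ ler_nat ltnS.
have lpos : ae P (fun w : Om => 0 < (fun _ : Om => mu_ m) w).
  by apply: aeT => w; exact: mu_gt0.
have Hp := fun n => @pazy_iter (Nm m') (Nm_sc m') (Nm_tri m') (mu_ m') (Rm m')
  (mu_gt0 m') (HRm m') (Nm_contr m') (fun _ => mu_ m) (Rm m) n (mcst (mu_ m))
  lpos lmu (HRm m) y.
apply: (aeS (aeAnd (aeN (fun n => Nm_lower m' (Tm m n y)))
   (aeAnd (aeN Hp) (Nm_issup m y)))) => w [h1 [h2 h3]].
apply: h3.2 => n; exact: (le_trans (h1 n) (h2 n)).
Qed.

Lemma Nr_issup y : ae P (fun w => issup (fun m => Nm m y w) (Nr y w)).
Proof.
apply: (aeS (aeN (fun m => Nm_upper m y))) => w h.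
by apply: bsup_issup => m; apply: le_Bd.
Qed.

Lemma Nr_mble y : mble (Nr y).
Proof. by apply: bsup_mble => [m|]; [exact: Nm_mble|exact: Bd_mble]. Qed.

Lemma Nr_hom xi y : L0 xi ->
  ae P (fun w => Nr (smul xi y) w = kabs (xi w) * Nr y w).
Proof.
move=> Lx.
apply: (aeS (aeAnd (aeN (fun m => Nm_hom m _ y Lx))
   (aeAnd (Nr_issup (smul xi y)) (Nr_issup y)))) => w [h1 [h2 h3]].
apply: (issup_uniq h2); apply: (issup_ext _ (issup_scale (kabs_ge0 _ _ (xi w)) h3)).
by move=> n /=; rewrite h1.
Qed.

Lemma Nr_tri y z : ae P (fun w => Nr (y + z) w <= Nr y w + Nr z w).
Proof.
apply: (aeS (aeAnd (aeN (fun m => Nm_tri m y z))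
   (aeAnd (Nr_issup (y + z)) (aeAnd (Nr_issup y) (Nr_issup z)))))
   => w [h1 [h2 [h3 h4]]].
apply: h2.2 => n; apply: (le_trans (h1 n)).
by apply: lerD; [apply: h3.1|apply: h4.1].
Qed.

Lemma Nr_lower y : ae P (fun w => nrm y w <= Nr y w).
Proof.
apply: (aeS (aeAnd (Nm_lower 0 y) (Nr_issup y))) => w [h1 h2].
exact: (le_trans h1 (h2.1 0%N)).
Qed.

Lemma Nr_upper y : ae P (fun w => Nr y w <= M w * nrm y w).
Proof.
apply: (aeS (aeAnd (Nr_issup y) (aeN (fun m => Nm_upper m y)))) => w [h1 h2].
exact: h1.2.
Qed.

Lemma Nr_contr (xi : Om -> R) (Rx : S -> S) (x : S) : mble xi -> ae P (fun w => 0 < xi w) -> isR xi Rx ->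
  ae P (fun w => Nr (sc xi (Rx x)) w <= Nr x w).
Proof.
move=> mxi xpos HR; set z := sc xi (Rx x).
have claim : forall j, ae P (fun w => xi w <= mu_ j -> Nm j z w <= Nm j x w).
  move=> j.
  set l := fun w => Num.min (xi w) (mu_ j).
  have ml : mble l by apply: measurable_minr => //; exact: mcst.
  have lpos : ae P (fun w => 0 < l w).
    by apply: (aeS xpos) => w h; rewrite /l lt_min h mu_gt0.
  have lmu : forall w, l w <= mu_ j by move=> w; rewrite /l ge_min lexx orbT.
  have [Rl Hl] := Hres l (conj ml lpos).
  set B := [set w | xi w <= mu_ j].
  have mB : measurable B.
    have := mxi measurableT _ (measurable_itv `]-oo, mu_ j]); rewrite setTI.
    suff -> : B = xi @^-1` `]-oo, mu_ j] by [].
    by apply/seteqP; split => w /=; rewrite in_itv /=.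
  have mI : mble (\1_B : Om -> R) by apply: measurable_indic.
  have eB : forall w, B w -> xi w = l w by move=> w Bw; rewrite /l min_l.
  have e : sc (\1_B) z = sc (\1_B) (sc l (Rl x)).
    have e1 : smul (kc k (fun w => \1_B w * xi w)) (Rx x) =
              smul (kc k (fun w => l w * \1_B w)) (Rx x).
      apply: smul_ext => w; rewrite /kc indicE.
      case: (boolP (w \in B)) => [wB|]; last by rewrite mulr0 mul0r.
      by rewrite mulr1 mul1r eB //; move: wB; rewrite in_setE.
    rewrite /z -scM // e1 scM // (res_local _ _ _ _ B x mxi ml mB eB HR Hl).
    rewrite -scM // -[RHS]scM //.
    by apply: smul_ext => w; rewrite /kc mulrC.
  have Hp := @pazy (Nm j) (Nm_sc j) (Nm_tri j) (mu_ j) (Rm j) (mu_gt0 j) (HRm j)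
    (Nm_contr j) l Rl ml lpos lmu Hl x.
  apply: (aeS (aeAnd (Nm_sc j (\1_B) z mI)
    (aeAnd (Nm_sc j (\1_B) (sc l (Rl x)) mI) Hp))) => w [h1 [h2 h3]] Bw.
  have i1 : `|\1_B w : R| = 1 by rewrite indicE mem_set // normr1.
  move: h1 h2; rewrite e i1 !mul1r => h1 h2.
  by rewrite -h1 h2.
have mono : forall m j, ae P (fun w => (m <= j)%N -> Nm m z w <= Nm j z w).
  move=> m j; case: (leqP m j) => h.
    by apply: (aeS (Nm_mono _ _ z h)) => w.
  by apply: aeT => w.
apply: (aeS (aeAnd (aeN claim) (aeAnd (aeN2 mono)
   (aeAnd (Nr_issup z) (Nr_issup x))))) => w [h1 [h2 [h3 h4]]].
apply: h3.2 => m.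
set j := maxn m (Num.Def.trunc (xi w)).
have hj : xi w <= mu_ j.
  rewrite /mu_; apply: ltW; apply: (lt_le_trans (truncnS_gt _)).
  by rewrite ler_nat ltnS leq_maxr.
apply: (le_trans (h2 m j (leq_maxl _ _))); apply: (le_trans (h1 j hj)).
exact: h4.1 j.
Qed.

Lemma main_result : exists nrm2 : S -> Om -> R,
    [/\ is_L0norm P smul nrm2,
        equiv_norms P nrm nrm2,
        (forall x, ae P (fun w => nrm x w <= nrm2 x w <= M w * nrm x w)) &
        (forall (xi : Om -> R) (Rx : S -> S) (x : S), L0pp P xi ->
           is_resolvent P smul nrm D A (kc k xi) Rx ->
           ae P (fun w => nrm2 (smul (kc k xi) (Rx x)) w <= nrm2 x w))].
Proof.
have hb : forall x, ae P (fun w => nrm x w <= Nr x w <= M w * nrm x w).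
  move=> x; apply: (aeS (aeAnd (Nr_lower x) (Nr_upper x))) => w [h1 h2].
  by apply/andP.
exists Nr; split => //.
- split.
  + move=> x; split; first exact: Nr_mble.
    apply: (aeS (aeAnd (nrm_ge0 x) (Nr_lower x))) => w [h1 h2].
    exact: le_trans h2.
  + by move=> xi x Lx; exact: Nr_hom.
  + exact: Nr_tri.
  + move=> x h0; apply: (nrm_def Hn).
    apply: (aeS (aeAnd h0 (aeAnd (nrm_ge0 x) (Nr_lower x)))) => w [h1 [h2 h3]].
    by apply/eqP; rewrite eq_le h2 andbT -h1.
- exact: (@equiv_bounds _ _ _ P S nrm Nr M nrm_mble Nr_mble mM nrm_ge0 hb).
- by move=> xi Rx x [mxi xpos] HR; exact: Nr_contr.
Qed.

End Main.

Lemma final (M : Om -> R) : L0plus P M ->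
  (forall xi : Om -> R, L0pp P xi -> exists Rx, isR xi Rx) ->
  (forall (xi : Om -> R) (Rx : S -> S) (n : nat), L0pp P xi ->
     isR xi Rx ->
     exists N, is_opnorm P nrm
                 (fun x => smul (kc k (fun w => xi w ^+ n)) (iter n Rx x)) N
               /\ ae P (fun w => N w <= M w)) ->
  exists nrm2 : S -> Om -> R,
    [/\ is_L0norm P smul nrm2,
        equiv_norms P nrm nrm2,
        (forall x, ae P (fun w => nrm x w <= nrm2 x w <= M w * nrm x w)) &
        (forall (xi : Om -> R) (Rx : S -> S) (x : S), L0pp P xi ->
           is_resolvent P smul nrm D A (kc k xi) Rx ->
           ae P (fun w => nrm2 (smul (kc k xi) (Rx x)) w <= nrm2 x w))].
Proof.
move=> [mM _] Hres Hop.
have Lc : forall m, L0pp P (fun _ : Om => mu_ m).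
  by move=> m; split; [exact: measurable_cst|apply: aeT => w; exact: mu_gt0].
have [Rm HRm] := choice (fun m => Hres _ (Lc m)).
exact: (@main_result M mM Rm HRm Hop Hres).
Qed.

End Basic.

Theorem lemma4p8 (R : realType) (k : kind) (d : measure_display)
  (Om : measurableType d) (P : probability Om R)
  (S : zmodType) (smul : (Om -> Kt R k) -> S -> S) (nrm : S -> Om -> R)
  (D : set S) (A : S -> S) (M : Om -> R) :
  is_RN_module P smul nrm ->
  el_complete P nrm ->
  is_partial_modhom smul D A ->
  (forall xi : Om -> R, L0pp P xi ->
     exists Rx, is_resolvent P smul nrm D A (kc k xi) Rx) ->
  L0plus P M -> ae P (fun w => 1 <= M w) ->
  (forall (xi : Om -> R) (Rx : S -> S) (n : nat), L0pp P xi ->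
     is_resolvent P smul nrm D A (kc k xi) Rx ->
     exists N, is_opnorm P nrm
                 (fun x => smul (kc k (fun w => xi w ^+ n)) (iter n Rx x)) N
               /\ ae P (fun w => N w <= M w)) ->
  exists nrm2 : S -> Om -> R,
    [/\ is_L0norm P smul nrm2,
        equiv_norms P nrm nrm2,
        (forall x, ae P (fun w => nrm x w <= nrm2 x w <= M w * nrm x w)) &
        (forall (xi : Om -> R) (Rx : S -> S) (x : S), L0pp P xi ->
           is_resolvent P smul nrm D A (kc k xi) Rx ->
           ae P (fun w => nrm2 (smul (kc k xi) (Rx x)) w <= nrm2 x w))].
Proof.
Proof.
move=> [Hm Hn] _ HA Hres HM _ Hop.
exact: (@final R k d Om P S smul nrm Hm Hn D A HA M HM Hres Hop).
Qed.
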